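(* Consider a canonical game (with $m\ge1$). (i) If the action groups satisfy $S_n\le A< B\le U(n)$, then neither player has a strong winning strategy. (ii) If the action groups satisfy $S_n\le B< A\le U(n)$, then neither player has a strong winning strategy.
   Context: Setting: a quantum system in $\mathbb{C}^n$ with computational basis $\ket{0},\dots,\ket{n-1}$, initial basis state $\ket{q_0}$, and target basis states $\ket{q_A}$ (player 1) and $\ket{q_B}$ (player 2) with $\ket{q_A}\neq\ket{q_B}$. Player 1's moves come from a subgroup $A\le U(n)$ and player 2's from a subgroup $B\le U(n)$; $A<B$ means $A$ is a proper subgroup of $B$. $S_n$ denotes the symmetric group, identified with the subgroup of $U(n)$ of $n\times n$ permutation matrices. Canonical game: $2m$ rounds; a strategy of player 1 is $\sigma_1=(A_1,\dots,A_m)$, $A_i\in A$, a strategy of player 2 is $\sigma_2=(B_1,\dots,B_m)$, $B_i\in B$, and the final state $B_mA_m\cdots B_1A_1\ket{q_0}$ is measured in the computational basis; player 1 wins on outcome $\ket{q_A}$, player 2 on outcome $\ket{q_B}$. A strategy of a player is a strong winning strategy if for every strategy of the opponent that player wins with probability $1$. *)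

(* Defs.v *)
From HB Require Import structures.
From mathcomp Require Import all_boot all_order all_algebra all_fingroup.
From mathcomp Require Import sesquilinear spectral.
From mathcomp Require Import complex.
From mathcomp Require Import reals.
Set Implicit Arguments. Unset Strict Implicit. Unset Printing Implicit Defensive.
Import Order.TTheory GRing.Theory Num.Theory.
Local Open Scope ring_scope.

Definition subgroup_U (C : numClosedFieldType) (n : nat) (G : {pred 'M[C]_n}) : Prop :=
  [/\ forall M, M \in G -> M \is unitarymx,
      1%:M \in G,
      forall M N, M \in G -> N \in G -> M *m N \in G
    & forall M, M \in G -> invmx M \in G].

Definition contains_Sn (C : numClosedFieldType) (n : nat) (G : {pred 'M[C]_n}) : Prop :=
  forall s : 'S_n, perm_mx s \in G.

Definition proper_subgrp (T : Type) (H G : {pred T}) : Prop :=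
  {subset H <= G} /\ exists x, x \in G /\ x \notin H.

Definition ket (C : numClosedFieldType) (n : nat) (q : 'I_n) : 'cV[C]_n :=
  delta_mx q ord0.

(* Final state B_m A_m ... B_1 A_1 |q0> of the canonical game with 2m rounds,
   with strategies sA = (A_1,...,A_m), sB = (B_1,...,B_m) indexed by 'I_m. *)
Definition final_state (C : numClosedFieldType) (n m : nat) (q0 : 'I_n)
  (sA sB : 'I_m -> 'M[C]_n) : 'cV[C]_n :=
  foldl (fun v i => sB i *m (sA i *m v)) (ket C q0) (enum 'I_m).

Definition prob (C : numClosedFieldType) (n : nat) (v : 'cV[C]_n) (q : 'I_n) : C :=
  `|v q ord0| ^+ 2.

Definition strong_win_1 (C : numClosedFieldType) (n m : nat) (A B : {pred 'M[C]_n})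
  (q0 qA : 'I_n) : Prop :=
  exists sA : 'I_m -> 'M[C]_n, (forall i, sA i \in A) /\
    forall sB : 'I_m -> 'M[C]_n, (forall i, sB i \in B) ->
      prob (final_state q0 sA sB) qA = 1.

Definition strong_win_2 (C : numClosedFieldType) (n m : nat) (A B : {pred 'M[C]_n})
  (q0 qB : 'I_n) : Prop :=
  exists sB : 'I_m -> 'M[C]_n, (forall i, sB i \in B) /\
    forall sA : 'I_m -> 'M[C]_n, (forall i, sA i \in A) ->
      prob (final_state q0 sA sB) qB = 1.

(* Main.v *)
Require Import Defs.
From HB Require Import structures.
From mathcomp Require Import all_boot all_order all_algebra all_fingroup.
From mathcomp Require Import sesquilinear spectral complex reals.
Import Order.TTheory GRing.Theory Num.Theory.
Local Open Scope ring_scope.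

Section Aux.
Local Open Scope sesquilinear_scope.
Variable C : numClosedFieldType.
Variables n m : nat.

Lemma foldl_mulr p q (f g : 'I_m -> 'M[C]_n) (N : 'M[C]_(n, p)) (P : 'M[C]_(p, q)) s :
  foldl (fun N i => f i *m (g i *m N)) (N *m P) s =
  foldl (fun N i => f i *m (g i *m N)) N s *m P.
Proof.
elim: s N => [|a s IH] N //=.
by rewrite -IH !mulmxA.
Qed.

Lemma eq_foldl_in (f g f' g' : 'I_m -> 'M[C]_n) (N : 'M[C]_n) s :
  {in s, f =1 f'} -> {in s, g =1 g'} ->
  foldl (fun N i => f i *m (g i *m N)) N s =
  foldl (fun N i => f' i *m (g' i *m N)) N s.
Proof.
elim: s N => [|a s IH] N //= Hf Hg.
rewrite Hf ?Hg ?mem_head //; apply: IH => x xs.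
  by apply: Hf; rewrite in_cons xs orbT.
by apply: Hg; rewrite in_cons xs orbT.
Qed.

Lemma foldl_unitary (f g : 'I_m -> 'M[C]_n) (N : 'M[C]_n) s :
  (forall i, f i \is unitarymx) -> (forall i, g i \is unitarymx) ->
  N \is unitarymx ->
  foldl (fun N i => f i *m (g i *m N)) N s \is unitarymx.
Proof.
move=> Hf Hg; elim: s N => [|a s IH] N //= HN.
by apply: IH; rewrite !mul_unitarymx.
Qed.

Lemma final_stateE q0 (sA sB : 'I_m -> 'M[C]_n) :
  final_state q0 sA sB =
  foldl (fun N i => sB i *m (sA i *m N)) 1%:M (enum 'I_m) *m ket C q0.
Proof. by rewrite /final_state -foldl_mulr mul1mx. Qed.

Lemma rownorm (M : 'M[C]_n) i : M \is unitarymx ->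
  \sum_j `|M i j| ^+ 2 = 1.
Proof.
move=> /unitarymxP Mu; have := congr1 (fun X : 'M[C]_n => X i i) Mu.
rewrite !mxE eqxx /= => E; rewrite -[RHS]E.
by apply: eq_bigr => j _; rewrite !mxE normCK.
Qed.

Lemma two_ones (M : 'M[C]_n) i a b : M \is unitarymx -> a != b ->
  `|M i a| ^+ 2 = 1 -> `|M i b| ^+ 2 = 1 -> False.
Proof.
move=> Mu ab Ha Hb; have := @rownorm M i Mu.
rewrite (bigD1 a) //= (bigD1 b) 1?eq_sym //= Ha Hb.
set r := \sum_(_ | _) _ => H.
have r0 : 0 <= r by apply: sumr_ge0 => j _; rewrite exprn_ge0.
have : 0 < 1 + r by rewrite ltr_pwDl.
have -> : 1 + r = 0 by apply: (@addrI _ 1); rewrite addr0.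
by rewrite ltxx.
Qed.

Lemma tperm_eq (x y z : 'I_n) : (tperm x y z == x) = (z == y).
Proof.
case: tpermP => [->|->|/eqP zx /eqP zy]; rewrite ?eqxx ?(eq_sym x) //.
by rewrite (negbTE zx) (negbTE zy).
Qed.

Lemma perm_ket (q k : 'I_n) : perm_mx (tperm q k) *m ket C q = ket C k.
Proof.
rewrite -row_permE; apply/matrixP => i j; rewrite !mxE tperm_eq.
by rewrite !ord1.
Qed.

Lemma mul_ket (M : 'M[C]_n) (k i : 'I_n) : (M *m ket C k) i ord0 = M i k.
Proof. by rewrite /ket -colE mxE. Qed.

Lemma perm_apply (s : 'S_n) (v : 'cV[C]_n) i : (perm_mx s *m v) i ord0 = v (s i) ord0.
Proof. by rewrite -row_permE mxE. Qed.

Lemma colnorm (M : 'M[C]_n) j : M \is unitarymx ->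
  \sum_i `|M i j| ^+ 2 = 1.
Proof.
rewrite -trmxC_unitary => /(@rownorm _ j) <-.
by apply: eq_bigr => i _; rewrite !mxE norm_conjC.
Qed.

(* player 1 cannot force: last move of player 2 *)
Lemma no_win1 (A B : {pred 'M[C]_n}) q0 qA qB :
  (0 < m)%N -> qA != qB -> subgroup_U A -> subgroup_U B -> contains_Sn B ->
  ~ strong_win_1 m A B q0 qA.
Proof.
move=> m0 ab [Au A1 _ _] [Bu B1 _ _] SB [sA [sAA win]].
have Hne : enum 'I_m != [::].
  by rewrite -size_eq0 size_enum_ord -lt0n.
have [s [il Es]] : exists s il, enum 'I_m = rcons s il.
  by case/lastP: (enum 'I_m) Hne => [//|s il _]; exists s, il.
have := enum_uniq 'I_m; rewrite Es rcons_uniq => /andP [ils _].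
pose sB (P : 'M[C]_n) i := if i == il then P else 1%:M.
pose N := foldl (fun N i => (1%:M : 'M[C]_n) *m (sA i *m N)) 1%:M s.
have E : forall P, final_state q0 sA (sB P) = P *m ((sA il *m N) *m ket C q0).
  move=> P; rewrite final_stateE Es foldl_rcons /sB eqxx !mulmxA; congr (_ *m _ *m _ *m _).
  apply: eq_foldl_in => // i ii; by rewrite (negbTE (memPn ils _ ii)).
have Ku : sA il *m N \is unitarymx.
  apply: mul_unitarymx; first exact: Au (sAA il).
  apply: foldl_unitary => [i|i|]; [exact: Bu B1 | exact: Au (sAA i) | exact: Bu B1].
have inB : forall (t : 'S_n) i, sB (perm_mx t) i \in B.
  by move=> t i; rewrite /sB; case: ifP.
have H1 := win _ (inB 1%g); have H2 := win _ (inB (tperm qA qB)).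
rewrite /prob E perm_apply mul_ket perm1 in H1.
rewrite /prob E perm_apply mul_ket tpermL in H2.
apply: (@two_ones ((sA il *m N)^t*) q0 qA qB); rewrite ?trmxC_unitary //.
  by rewrite -H1 !mxE norm_conjC.
by rewrite -H2 !mxE norm_conjC.
Qed.

Lemma no_win2 (A B : {pred 'M[C]_n}) q0 qA qB :
  (0 < m)%N -> qA != qB -> subgroup_U A -> subgroup_U B -> contains_Sn A ->
  ~ strong_win_2 m A B q0 qB.
Proof.
move=> m0 ab [Au A1 _ _] [Bu B1 _ _] SA [sB [sBB win]].
have Hne : enum 'I_m != [::].
  by rewrite -size_eq0 size_enum_ord -lt0n.
have [i0 [s Es]] : exists i0 s, enum 'I_m = i0 :: s.
  by case: (enum 'I_m) Hne => [//|i0 s _]; exists i0, s.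
have := enum_uniq 'I_m; rewrite Es /= => /andP [i0s _].
pose sA (P : 'M[C]_n) i := if i == i0 then P else 1%:M.
pose H := foldl (fun N i => sB i *m ((1%:M : 'M[C]_n) *m N)) (sB i0) s.
have E : forall P, final_state q0 (sA P) sB = H *m (P *m ket C q0).
  move=> P; rewrite final_stateE Es /= /sA eqxx mulmx1 foldl_mulr -mulmxA; congr (_ *m _).
  apply: eq_foldl_in => // i ii; by rewrite (negbTE (memPn i0s _ ii)).
have Hu : H \is unitarymx.
  apply: foldl_unitary => [i|i|]; [exact: Bu (sBB i) | exact: Au A1 | exact: Bu (sBB i0)].
have inA : forall (t : 'S_n) i, sA (perm_mx t) i \in A.
  by move=> t i; rewrite /sA; case: ifP.
have H1 := win _ (inA (tperm q0 qA)); have H2 := win _ (inA (tperm q0 qB)).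
rewrite /prob E perm_ket mul_ket in H1.
rewrite /prob E perm_ket mul_ket in H2.
exact: (@two_ones H qB qA qB).
Qed.

End Aux.

Theorem theorem3 (R : realType) (n m : nat) (q0 qA qB : 'I_n)
  (A B : {pred 'M[R[i]]_n}) :
  (1 <= m)%N -> qA != qB ->
  subgroup_U A -> subgroup_U B ->
  (contains_Sn A /\ proper_subgrp A B ->
     ~ strong_win_1 m A B q0 qA /\ ~ strong_win_2 m A B q0 qB) /\
  (contains_Sn B /\ proper_subgrp B A ->
     ~ strong_win_1 m A B q0 qA /\ ~ strong_win_2 m A B q0 qB).
Proof.
move=> m1 ab GA GB.
have W1 := @no_win1 _ n m A B q0 qA qB m1 ab GA GB.
have W2 := @no_win2 _ n m A B q0 qA qB m1 ab GA GB.
split => -[S [sub _]].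
- split; first (apply: W1 => t; apply: sub; exact: S).
  exact: W2 S.
- split; first exact: W1 S.
  apply: W2 => t; apply: sub; exact: S.
Qed.
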